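(* Let $F:\mathcal{P}(V,A)\to S_2(A)$ be a consular election rule satisfying SPP and SPO. Let $P$ be a profile with $F(P)=\{a,b\}$, let $i$ be a voter, $s\in A$, and let $P_i'$ be the linear order obtained from $P_i$ by moving $s$ down some number of positions (the relative order of the other alternatives unchanged). If $s\notin\{a,b\}$, then $F(P_i'P_{-i})=F(P)$. If $s=a$ (the case $s=b$ being symmetric), then either $F(P_i'P_{-i})=F(P)$, or $F(P_i'P_{-i})=\{c,b\}$ for some $c\neq s$; and the latter happens only if $s$ drops below $c$, i.e. $s\succ_i c$ in $P_i$ and $c\succ_i' s$ in $P_i'$.
   Context: $V$ is a finite nonempty set of voters, $A$ a finite set of alternatives; a profile $P$ assigns to each voter $i$ a linear order $P_i$ on $A$; $P_i'P_{-i}$ replaces voter $i$'s order by $P_i'$. $S_2(A)$ is the set of 2-element subsets of $A$; a consular election rule is a map $F:\mathcal{P}(V,A)\to S_2(A)$. SPO: for all $P$, $i$, $P_i'$, $\mathrm{best}(P_i,F(P))\succeq_i\mathrm{best}(P_i,F(P_i'P_{-i}))$; SPP: same with $\mathrm{worst}$, where $\mathrm{best}(P_i,W)$, $\mathrm{worst}(P_i,W)$ are the $P_i$-best and $P_i$-worst elements of $W$. *)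

(* Defs.v *)
From mathcomp Require Import all_boot.
Set Implicit Arguments. Unset Strict Implicit. Unset Printing Implicit Defensive.

Section Defs.
Variable A : finType.

(* A linear order on A, given as its ranking list (best first):
   a duplicate-free enumeration of all of A. *)
Definition linorder := {l : seq A | perm_eq l (enum A)}.

Definition prefers (L : linorder) (x y : A) : bool :=
  index x (val L) < index y (val L).
Definition wprefers (L : linorder) (x y : A) : bool :=
  index x (val L) <= index y (val L).

Definition is_best (L : linorder) (W : {set A}) (x : A) : Prop :=
  x \in W /\ forall y, y \in W -> wprefers L x y.
Definition is_worst (L : linorder) (W : {set A}) (x : A) : Prop :=
  x \in W /\ forall y, y \in W -> wprefers L y x.

Definition move_down (l : seq A) (s : A) (k : nat) : seq A :=
  let l' := rem s l in
  take (index s l + k) l' ++ s :: drop (index s l + k) l'.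
End Defs.

Section Rules.
Variables (V A : finType).
Definition profile := V -> linorder A.

Definition upd (P : profile) (i : V) (Li : linorder A) : profile :=
  fun j => if j == i then Li else P j.

Definition consular (F : profile -> {set A}) : Prop :=
  forall P, #|F P| = 2.

Definition SPO (F : profile -> {set A}) : Prop :=
  forall P i Li' x y, is_best (P i) (F P) x ->
    is_best (P i) (F (upd P i Li')) y -> wprefers (P i) x y.

Definition SPP (F : profile -> {set A}) : Prop :=
  forall P i Li' x y, is_worst (P i) (F P) x ->
    is_worst (P i) (F (upd P i Li')) y -> wprefers (P i) x y.
End Rules.

(* Main.v *)
Require Import Defs.
From mathcomp Require Import all_boot.
From mathcomp Require Import zify.
From Stdlib Require Import FunctionalExtensionality.
Set Implicit Arguments. Unset Strict Implicit. Unset Printing Implicit Defensive.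

Section Aux.
Variable A : finType.

Lemma lin_mem (L : linorder A) x : x \in val L.
Proof. by rewrite (perm_mem (valP L)) mem_enum. Qed.

Lemma lin_uniq (L : linorder A) : uniq (val L).
Proof. by rewrite (perm_uniq (valP L)) enum_uniq. Qed.

Lemma idx_inj (L : linorder A) x y : index x (val L) = index y (val L) -> x = y.
Proof.
move=> E. by rewrite -(nth_index x (lin_mem L x)) E (nth_index x (lin_mem L y)).
Qed.

Definition bestof (L : linorder A) u v := if wprefers L u v then u else v.
Definition worstof (L : linorder A) u v := if wprefers L u v then v else u.

Lemma bestofP L u v : is_best L [set u; v] (bestof L u v).
Proof.
rewrite /bestof /is_best /wprefers; case: ifP => H; split; rewrite ?in_set2 ?eqxx ?orbT //;
 move=> y; rewrite in_set2 => /orP [] /eqP ->; rewrite ?leqnn //; lia.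
Qed.

Lemma worstofP L u v : is_worst L [set u; v] (worstof L u v).
Proof.
rewrite /worstof /is_worst /wprefers; case: ifP => H; split; rewrite ?in_set2 ?eqxx ?orbT //;
 move=> y; rewrite in_set2 => /orP [] /eqP ->; rewrite ?leqnn //; lia.
Qed.

Lemma idx_best L u v : index (bestof L u v) (val L) = minn (index u (val L)) (index v (val L)).
Proof. rewrite /bestof /wprefers; case: ifP => H; lia. Qed.
Lemma idx_worst L u v : index (worstof L u v) (val L) = maxn (index u (val L)) (index v (val L)).
Proof. rewrite /worstof /wprefers; case: ifP => H; lia. Qed.

Lemma set2_eq (L : linorder A) a b c d :
  minn (index c (val L)) (index d (val L)) = minn (index a (val L)) (index b (val L)) ->
  maxn (index c (val L)) (index d (val L)) = maxn (index a (val L)) (index b (val L)) ->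
  [set c; d] = [set a; b].
Proof.
move=> H1 H2.
have [[E1 E2]|[E1 E2]] : (index c (val L) = index a (val L) /\ index d (val L) = index b (val L)) \/
   (index c (val L) = index b (val L) /\ index d (val L) = index a (val L)) by lia.
  by rewrite (idx_inj E1) (idx_inj E2).
by rewrite (idx_inj E1) (idx_inj E2) setUC.
Qed.

Lemma before_s (p r : seq A) s x : s \notin p ->
  index x (p ++ s :: r) < index s (p ++ s :: r) -> x \in p.
Proof.
move=> sp; rewrite !index_cat (negbTE sp) /= eqxx addn0; case: ifP => // _; lia.
Qed.

Lemma in_before (p r : seq A) s x : s \notin p -> x \in p ->
  index x (p ++ r) < index s (p ++ r).
Proof.
move=> sp xp; rewrite !index_cat (negbTE sp) xp.
have := index_mem x p; rewrite xp; lia.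
Qed.

Lemma md_split (p q : seq A) s k : s \notin p ->
  move_down (p ++ s :: q) s k = p ++ take k q ++ s :: drop k q.
Proof.
move=> sp; rewrite /move_down remE index_cat (negbTE sp) /= eqxx addn0.
have -> : take (size p) (p ++ s :: q) ++ drop (size p).+1 (p ++ s :: q) = p ++ q.
  by elim: p {sp} => [|x p IH] /=; rewrite ?drop0 ?IH.
rewrite take_cat drop_cat ltnNge leq_addr /= addKn -catA //.
Qed.

Definition Dd n x x' := (x = n /\ x' = n + 1) \/ (x = n + 1 /\ x' = n) \/ (x <> n /\ x <> n+1 /\ x' = x).
Lemma t1 n a b c d a' b' c' d' :
  a <> n -> b <> n -> a <> b -> c <> d ->
  minn a b <= minn c d -> maxn a b <= maxn c d ->
  minn c' d' <= minn a' b' -> maxn c' d' <= maxn a' b' ->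
  Dd n a a' -> Dd n b b' -> Dd n c c' -> Dd n d d' ->
  minn c d = minn a b /\ maxn c d = maxn a b.
Proof.
move=> ? ? ? ? ? ? ? ?.
do 4 (case=> [[? ?]|[[? ?]|[? [? ?]]]]); subst; lia.
Qed.
Lemma t2 n b c d b' c' d' :
  b <> n -> c <> d ->
  minn n b <= minn c d -> maxn n b <= maxn c d ->
  minn c' d' <= minn (n+1) b' -> maxn c' d' <= maxn (n+1) b' ->
  Dd n b b' -> Dd n c c' -> Dd n d d' ->
  (minn c d = minn n b /\ maxn c d = maxn n b) \/ (c = n+1 /\ d = b) \/ (d = n+1 /\ c = b).
Proof.
move=> ? ? ? ? ? ?.
do 3 (case=> [[? ?]|[[? ?]|[? [? ?]]]]); subst; lia.
Qed.
End Aux.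

Section Rules.
Variables (V A : finType).

Lemma upd_same (P : profile V A) i L : upd P i L i = L.
Proof. by rewrite /upd eqxx. Qed.
Lemma upd_upd (P : profile V A) i L L2 : upd (upd P i L) i L2 = upd P i L2.
Proof. apply: functional_extensionality => x; rewrite /upd; by case: eqP. Qed.
Lemma upd_id (P : profile V A) i : upd P i (P i) = P.
Proof. apply: functional_extensionality => x; rewrite /upd; by case: eqP => // ->. Qed.

Lemma spo_min (F : profile V A -> {set A}) P i L2 a b c d : SPO F ->
  F P = [set a; b] -> F (upd P i L2) = [set c; d] ->
  minn (index a (val (P i))) (index b (val (P i))) <=
  minn (index c (val (P i))) (index d (val (P i))).
Proof.
move=> H E1 E2.
have := H P i L2 (bestof (P i) a b) (bestof (P i) c d).
rewrite E1 E2 /wprefers !idx_best; apply; exact: bestofP.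
Qed.

Lemma spp_max (F : profile V A -> {set A}) P i L2 a b c d : SPP F ->
  F P = [set a; b] -> F (upd P i L2) = [set c; d] ->
  maxn (index a (val (P i))) (index b (val (P i))) <=
  maxn (index c (val (P i))) (index d (val (P i))).
Proof.
move=> H E1 E2.
have := H P i L2 (worstof (P i) a b) (worstof (P i) c d).
rewrite E1 E2 /wprefers !idx_worst; apply; exact: worstofP.
Qed.
End Rules.

Section Step.
Variables (V A : finType).

Lemma step (F : profile V A -> {set A}) :
  consular F -> SPP F -> SPO F ->
  forall (P : profile V A) (a b : A) i s t (p q : seq A) (L' : linorder A),
  F P = [set a; b] -> val (P i) = p ++ s :: t :: q -> val L' = p ++ t :: s :: q ->
  (s \notin [set a; b] -> F (upd P i L') = F P) /\
  (s = a -> F (upd P i L') = F P \/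
     (F (upd P i L') = [set t; b] /\ t != s /\ prefers (P i) s t /\ prefers L' t s)).
Proof.
move=> HF Hp Ho P a b i s t p q L' FP Hl Hl'.
have U := lin_uniq (P i); rewrite Hl cat_uniq /= in U.
move: U; rewrite ?negb_or ?in_cons ?negb_or => U.
case/and5P: U => _ /and3P [sp tp _] /andP [st _] _ _.
have rs : index s (val (P i)) = size p by rewrite Hl index_cat (negbTE sp) /= eqxx addn0.
have rt : index t (val (P i)) = size p + 1.
  by rewrite Hl index_cat (negbTE tp) /= (negbTE st) eqxx addn1.
have r' : forall x, index x (val L') = if x == s then size p + 1 else if x == t then size p
                                        else index x (val (P i)).
  move=> x; rewrite Hl Hl' !index_cat.
  case: (eqVneq x s) => [->|xs]; first by rewrite (negbTE sp) /= eq_sym (negbTE st) eqxx addn1.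
  case: (eqVneq x t) => [->|xt]; first by rewrite (negbTE tp) /= eqxx addn0.
  case: ifP => //= _; by rewrite ![t == x]eq_sym ![s == x]eq_sym (negbTE xs) (negbTE xt).
have D : forall x, Dd (size p) (index x (val (P i))) (index x (val L')).
  move=> x; rewrite /Dd r'.
  case: (eqVneq x s) => [->|xs]; first by left.
  case: (eqVneq x t) => [->|xt]; first by right; left.
  right; right; split; last split => //.
    by move=> E; move: xs; rewrite -rs in E; rewrite (idx_inj E) eqxx.
  by move=> E; move: xt; rewrite -rt in E; rewrite (idx_inj E) eqxx.
have ab : a != b.
  by apply/eqP => ab; move: (HF P); rewrite FP ab setUid cards1.
have /cards2P [c [d [cd E']]] : #|F (upd P i L')| == 2 by rewrite HF.
have H1 := spo_min Ho FP E'.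
have H2 := spp_max Hp FP E'.
have FP' : F (upd (upd P i L') i (P i)) = [set a; b] by rewrite upd_upd upd_id.
have H3 := spo_min Ho E' FP'.
have H4 := spp_max Hp E' FP'.
rewrite upd_same in H3 H4.
have rab : index a (val (P i)) <> index b (val (P i)).
  by move/idx_inj => E; move: ab; rewrite E eqxx.
have rcd : index c (val (P i)) <> index d (val (P i)).
  by move/idx_inj => E; move: cd; rewrite E eqxx.
split.
  rewrite in_set2 negb_or => /andP [sa sb].
  have ras : index a (val (P i)) <> size p.
    by rewrite -rs => /idx_inj E; move: sa; rewrite E eqxx.
  have rbs : index b (val (P i)) <> size p.
    by rewrite -rs => /idx_inj E; move: sb; rewrite E eqxx.
  have [m1 m2] := t1 ras rbs rab rcd H1 H2 H3 H4 (D a) (D b) (D c) (D d).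
  by rewrite E' FP; apply: (@set2_eq _ (P i)).
move=> sa; subst a.
have rbs : index b (val (P i)) <> size p by rewrite -rs; move=> E; apply: rab.
have r's : index s (val L') = size p + 1 by rewrite r' eqxx.
rewrite r's in H3 H4; rewrite rs in H1 H2.
have [[m1 m2]|[[e1 e2]|[e1 e2]]] := t2 rbs rcd H1 H2 H3 H4 (D b) (D c) (D d).
  by rewrite -rs in m1 m2; left; rewrite E' FP; apply: (@set2_eq _ (P i)).
right; rewrite -rt in e1; rewrite E' (idx_inj e1) (idx_inj e2).
  split => //; split; first by rewrite eq_sym.
  by rewrite /prefers rs rt !r' [t == s]eq_sym (negbTE st) !eqxx; split; lia.
right; rewrite -rt in e1; rewrite E' (idx_inj e1) (idx_inj e2) setUC.
split => //; split; first by rewrite eq_sym.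
by rewrite /prefers rs rt !r' [t == s]eq_sym (negbTE st) !eqxx; split; lia.
Qed.
End Step.

Lemma perm_mid (A : finType) (x y : seq A) s : perm_eq (x ++ s :: y) (s :: x ++ y).
Proof. by rewrite -(cat1s s y) perm_catCA. Qed.

Theorem lemma12 (V A : finType) (F : profile V A -> {set A}) :
  0 < #|V| -> consular F -> SPP F -> SPO F ->
  forall (P : profile V A) (a b : A) (i : V) (s : A) (k : nat)
         (Li' : linorder A),
    F P = [set a; b] ->
    val Li' = move_down (val (P i)) s k ->
    (s \notin [set a; b] -> F (upd P i Li') = F P) /\
    (s = a ->
       F (upd P i Li') = F P \/
       exists c : A, c != s /\ F (upd P i Li') = [set c; b] /\
                     prefers (P i) s c /\ prefers Li' c s).
Proof.
move=> _ HF Hp Ho P a b i s k Li' FP HLi.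
have [p [q Hl]] : exists p q, val (P i) = p ++ s :: q.
  move: (val (P i)) (lin_mem (P i) s) => l0 /splitPr [p q]; by exists p, q.
have U := lin_uniq (P i); rewrite Hl cat_uniq /= in U.
case/and3P: U => _ /norP [sp _] /andP [sq _].
have ab : a != b.
  by apply/eqP => ab; move: (HF P); rewrite FP ab setUid cards1.
have Lk_perm : forall n, perm_eq (p ++ take n q ++ s :: drop n q) (enum A).
  move=> n; apply: perm_trans (valP (P i)); rewrite Hl perm_cat2l.
  apply: perm_trans (perm_mid _ _ _) _; rewrite cat_take_drop; exact: perm_refl.
pose Lk n : linorder A := exist (fun l => perm_eq l (enum A)) _ (Lk_perm n).
have Aux : forall n x, prefers (P i) x s -> prefers (Lk n) x s.
  move=> n x; rewrite /prefers Hl => /(before_s sp) xp /=; exact: in_before.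
have main : forall n, (s \notin [set a; b] -> F (upd P i (Lk n)) = F P) /\
   (s = a -> F (upd P i (Lk n)) = F P \/ exists c, c != s /\
      F (upd P i (Lk n)) = [set c; b] /\ prefers (P i) s c /\ prefers (Lk n) c s).
  elim=> [|n [IH1 IH2]].
    have -> : Lk 0 = P i by apply: val_inj; rewrite /= take0 drop0 Hl.
    rewrite upd_id; split => // _; by left.
  have spn : s \notin p ++ take n q.
    rewrite mem_cat negb_or sp /=; apply: contra sq; exact: mem_take.
  case Edq: (drop n q) => [|t q3].
    have -> : Lk n.+1 = Lk n.
      apply: val_inj => /=.
      have sz : size q <= n by move/(congr1 size): Edq; rewrite size_drop /=; lia.
      rewrite Edq take_oversize ?drop_oversize ?take_oversize //; lia.
    by split.
  have HLn : val (Lk n) = (p ++ take n q) ++ s :: t :: q3 by rewrite /= Edq catA.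
  have HL : val ((upd P i (Lk n)) i) = (p ++ take n q) ++ s :: t :: q3 by rewrite upd_same.
  have HL' : val (Lk n.+1) = (p ++ take n q) ++ t :: s :: q3.
    rewrite /=.
    have -> : drop n.+1 q = q3 by rewrite -add1n -drop_drop Edq /= drop0.
    have -> : take n.+1 q = take n q ++ [:: t] by rewrite -addn1 takeD Edq /= take0.
    by rewrite -!catA.
  have Mono : forall c, prefers (Lk n) c s -> prefers (Lk n.+1) c s.
    move=> c; rewrite /prefers HLn HL' => /(before_s spn) cp; exact: in_before.
  split.
    move=> sab.
    have FPk : F (upd P i (Lk n)) = [set a; b] by rewrite IH1.
    have [h _] := step HF Hp Ho FPk HL HL'.
    by rewrite upd_upd in h; rewrite h // IH1.
  move=> sa.
  case: (IH2 sa) => [E | [c [cs [E [pc1 pc2]]]]].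
    have FPk : F (upd P i (Lk n)) = [set a; b] by rewrite E.
    have [_ h] := step HF Hp Ho FPk HL HL'.
    rewrite upd_upd in h.
    case: (h sa) => [E2 | [E2 [ts [p1 p2]]]]; first by left; rewrite E2 E.
    right; exists t; split => //; split; first by rewrite E2.
    split => //.
    have nts : ~~ prefers (P i) t s.
      apply/negP => /(Aux n); rewrite upd_same in p1; rewrite /prefers in p1 *; lia.
    have dts : index t (val (P i)) <> index s (val (P i)).
      by move/idx_inj => E3; move: ts; rewrite E3 eqxx.
    move: nts; rewrite /prefers; lia.
  have FPk : F (upd P i (Lk n)) = [set c; b] by rewrite E.
  have [h _] := step HF Hp Ho FPk HL HL'.
  rewrite upd_upd in h.
  have sn : s \notin [set c; b].
    rewrite in_set2 negb_or eq_sym cs /=; apply/eqP => sb; move: ab; by rewrite -sa sb eqxx.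
  right; exists c; split => //; split; first by rewrite h // E.
  split => //; exact: Mono.
have -> : Li' = Lk k by apply: val_inj; rewrite HLi Hl md_split.
exact: main.
Qed.
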